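(* Let $\Gamma$ be a graph with maximum degree $\Delta_\Gamma$, and let $V^*\subseteq V(\Gamma)$ be a random vertex set containing each vertex of $\Gamma$ independently with probability $q\le 1/\Delta_\Gamma$. Then with probability at least $1-\exp\!\big(-q^2e(\Gamma)/200\big)$, the induced subgraph $\Gamma[V^*]$ contains a matching of size at least $q^2e(\Gamma)/20$.
   Context: $e(\Gamma)$ denotes the number of edges of $\Gamma$. *)

(* Defs.v *)
From mathcomp Require Import all_boot all_order all_algebra.
From mathcomp Require Import reals.
From mathcomp Require Import sequences exp.
Set Implicit Arguments. Unset Strict Implicit. Unset Printing Implicit Defensive.
Import Order.TTheory GRing.Theory Num.Theory.
Local Open Scope ring_scope.

(* A finite simple graph is a symmetric irreflexive relation e on a finType T. *)

Definition edges (T : finType) (e : rel T) : {set {set T}} :=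
  [set A : {set T} | [exists x, exists y, e x y && (A == [set x; y])]].

Definition nedges (T : finType) (e : rel T) : nat := #|edges e|.

Definition deg (T : finType) (e : rel T) (v : T) : nat := #|[set u | e v u]|.
Definition maxdeg (T : finType) (e : rel T) : nat := (\max_(v : T) deg e v)%N.

Definition is_matching_in (T : finType) (e : rel T) (S : {set T})
    (M : {set {set T}}) : bool :=
  [&& M \subset edges e, [forall A in M, A \subset S] & trivIset M].

Definition has_matching_ge (R : realType) (T : finType) (e : rel T)
    (S : {set T}) (x : R) : bool :=
  [exists M : {set {set T}}, is_matching_in e S M && (x <= (#|M|%:R : R))].

(* Probability that the random set V* (each vertex independently with prob. q)
   equals S. *)
Definition pr_set (R : realType) (T : finType) (q : R) (S : {set T}) : R :=
  (\prod_(v in S) q) * (\prod_(v in ~: S) (1 - q)).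

Definition prob_event (R : realType) (T : finType) (q : R)
    (E : pred {set T}) : R :=
  \sum_(S : {set T} | E S) pr_set q S.

(* Main.v *)
Require Import Defs.
From mathcomp Require Import all_boot all_order all_algebra.
From mathcomp Require Import reals.
From mathcomp Require Import sequences exp.
From mathcomp Require Import ring lra.
Import Order.TTheory GRing.Theory Num.Theory.
Local Open Scope ring_scope.

Set Implicit Arguments. Unset Strict Implicit. Unset Printing Implicit Defensive.
Section Meas.
Variable R : realType.
Variable T : finType.
Variable q : R.

Definition prK (K S : {set T}) : R := q ^+ #|S| * (1 - q) ^+ #|K :\: S|.
Definition EK (K : {set T}) (f : {set T} -> R) : R :=
  \sum_(S : {set T} | S \subset K) prK K S * f S.

Lemma EK_split (K : {set T}) (w : T) (f : {set T} -> R) : w \in K ->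
  EK K f = q * EK (K :\ w) (fun S => f (w |: S)) + (1 - q) * EK (K :\ w) f.
Proof.
move=> wK; rewrite /EK (bigID (fun S : {set T} => w \in S)) /=.
congr (_ + _).
  rewrite (reindex_onto (fun S => w |: S) (fun S => S :\ w)); last first.
    by move=> S /andP[_ wS]; rewrite setD1K.
  rewrite mulr_sumr; apply: eq_big => S.
    rewrite subsetD1 setU11 andbT subUset sub1set wK /=.
    case: (boolP (w \in S)) => wS /=.
      rewrite andbF; apply/negbTE; apply/negP => /andP[_ /eqP h].
      by move: wS; rewrite -h !inE eqxx.
    by rewrite setU1K // eqxx !andbT.
  move=> /andP[_ /eqP h].
  have wS : w \notin S by rewrite -h !inE eqxx.
  rewrite /prK cardsU1 wS add1n exprS -!mulrA; congr (_ * _).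
  rewrite (_ : #|K :\: (w |: S)| = #|K :\ w :\: S|) //; apply: eq_card => v; rewrite !inE.
  by rewrite negb_or; case: (v == w); case: (v \in S).
rewrite mulr_sumr; apply: eq_big => S.
  by rewrite subsetD1 andbC.
move=> /andP[_ wS].
rewrite /prK.
have -> : #|K :\: S| = (#|K :\ w :\: S|).+1.
  rewrite (cardsD1 w) !inE wS wK /= add1n; congr (_.+1); apply: eq_card => v.
  by rewrite !inE; case: (v == w); case: (v \in S).
by rewrite exprS !mulrA [q ^+ _ * _]mulrC.
Qed.

Lemma EK_ler (K : {set T}) (f g : {set T} -> R) : 0 <= q <= 1 -> (forall S : {set T}, S \subset K -> f S <= g S) ->
  EK K f <= EK K g.
Proof.
move=> /andP[q0 q1] h; apply: ler_sum => S SK; apply: ler_wpM2l; last exact: h.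
by rewrite /prK mulr_ge0 // exprn_ge0 // subr_ge0.
Qed.

Lemma EK_set0 (f : {set T} -> R) : EK set0 f = f set0.
Proof.
rewrite /EK (big_pred1 set0); last by move=> S; rewrite subset0.
by rewrite /prK !cards0 setD0 !cards0 !expr0 !mul1r.
Qed.

Lemma EK1 (K : {set T}) : EK K (fun _ => 1) = 1.
Proof.
elim: {K}#|K| {-2}K (erefl #|K|) => [|n IH] K cK.
  by move/eqP: cK; rewrite cards_eq0 => /eqP ->; rewrite EK_set0.
have [w wK] : exists w, w \in K.
  by apply/set0Pn; rewrite -card_gt0 cK.
rewrite (EK_split _ wK) !IH ?mulr1 ?subrKC //.
- by move: cK; rewrite (cardsD1 w) wK add1n => -[].
Qed.
End Meas.

Section Run.
Variable T : finType.
Variable e : rel T.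

Fixpoint run (n : nat) (K U S : {set T}) : nat :=
  match n with
  | 0 => 0
  | n'.+1 =>
    match [pick w in K] with
    | None => 0
    | Some w =>
      if w \in S then
        match [pick u in U | e w u] with
        | Some u => (run n' (K :\ w) (U :\ u) S).+1
        | None => run n' (K :\ w) (w |: U) S
        end
      else run n' (K :\ w) U S
    end
  end.

Lemma run_irr n (K U S : {set T}) x : x \notin K ->
  run n K U (x |: S) = run n K U S.
Proof.
elim: n K U => [|n IH] K U xK //=.
case: pickP => [w wK|] //.
have xK' : x \notin K :\ w by rewrite inE negb_and xK orbT.
have -> : (w \in x |: S) = (w \in S).
  rewrite in_setU1; case: eqP => // wx; by move: xK; rewrite -wx wK.
by case: (w \in S) => //; case: [pick u in U | e w u] => [u|]; rewrite IH.
Qed.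

Lemma edges_neq0 : set0 \notin edges e.
Proof.
rewrite inE; apply/negP => /existsP[x /existsP[y /andP[_ /eqP h]]].
by move: (setU11 x [set y]); rewrite -h inE.
Qed.

Lemma run_match n (K U S : {set T}) : U \subset S ->
  (forall x, x \in U -> x \notin K) ->
  exists M : {set {set T}}, [/\ is_matching_in e S M, #|M| = run n K U S &
     forall B, B \in M -> B \subset U :|: K].
Proof.
have M0 : forall K U : {set T}, exists M : {set {set T}}, [/\ is_matching_in e S M, #|M| = 0%N &
     forall B, B \in M -> B \subset U :|: K].
  move=> K0 U0.
  exists set0; split; [|by rewrite cards0|by move=> B; rewrite inE].
  apply/and3P; split; first exact: sub0set.
    by apply/forall_inP => B; rewrite inE.
  by apply: trivIsetS (trivIset1 set0); apply: sub0set.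
elim: n K U => [|n IH] K U US UK /=; first exact: M0.
case: pickP => [w wK|_]; last exact: M0.
case: ifP => wS.
  case: pickP => [u /andP[uU ewu]|_].
    have [||M' [/and3P[M'E M'S M'T] cM' M'c]] := IH (K :\ w) (U :\ u).
    - by apply: subset_trans (subD1set U u) US.
    - by move=> x; rewrite !inE => /andP[_ xU]; rewrite negb_and (negbTE (UK x xU)) orbT.
    have wU : w \notin U by apply: contraL wK => /UK.
    have wB : forall B, B \in M' -> w \notin B.
      move=> B /M'c /subsetP BU; apply/negP => /BU; rewrite !inE eqxx /=.
      by rewrite (negbTE wU) andbF.
    have uB : forall B, B \in M' -> u \notin B.
      move=> B /M'c /subsetP BU; apply/negP => /BU; rewrite !inE eqxx /=.
      by rewrite (negbTE (UK u uU)) andbF.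
    have [TI nin] : trivIset ([set w; u] |: M') /\ [set w; u] \notin M'.
      apply: trivIsetU1 => //; last first.
        by apply/negP => /(subsetP M'E); rewrite (negbTE edges_neq0).
      move=> B BM; rewrite disjoint_subset; apply/subsetP => x.
      rewrite !inE => /orP[/eqP->|/eqP->]; [exact: wB | exact: uB].
    exists ([set w; u] |: M'); split.
    - apply/and3P; split => //.
        apply/subsetP => B; rewrite in_setU1 => /orP[/eqP->|BM].
          rewrite inE; apply/existsP; exists w; apply/existsP; exists u.
          by rewrite ewu eqxx.
        exact: (subsetP M'E).
      apply/forall_inP => B; rewrite in_setU1 => /orP[/eqP->|BM].
        apply/subsetP => x; rewrite !inE => /orP[/eqP->|/eqP->] //.
        exact: (subsetP US).
      exact: (forall_inP M'S).
    - by rewrite cardsU1 nin cM'.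
    - move=> B; rewrite in_setU1 => /orP[/eqP->|BM].
        apply/subsetP => x; rewrite !inE => /orP[/eqP->|/eqP->].
          by rewrite wK orbT.
        by rewrite uU.
      apply: subset_trans (M'c B BM) _.
      by apply: setUSS; apply: subD1set.
  have [||M' [HM cM' M'c]] := IH (K :\ w) (w |: U).
  - by rewrite subUset sub1set wS US.
  - move=> x; rewrite !inE => /orP[/eqP->|xU]; first by rewrite eqxx.
    by rewrite (negbTE (UK x xU)) andbF.
  exists M'; split => // B /M'c BU; apply: subset_trans BU _.
  apply/subsetP => x; rewrite !inE => /orP[/orP[/eqP->|->]|/andP[_ ->]]; rewrite ?orbT //.
  by rewrite wK orbT.
have [||M' [HM cM' M'c]] := IH (K :\ w) U => //.
- by move=> x /UK; rewrite inE negb_and => ->; rewrite orbT.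
exists M'; split => // B /M'c BU; apply: subset_trans BU _.
by apply: setUS; apply: subD1set.
Qed.
End Run.

Section Real.
Variable R : realType.

Lemma expR_le_inv (x : R) : x < 1 -> expR x <= (1 - x)^-1.
Proof.
move=> x1; have h : 1 - x <= expR (- x) by have := expR_ge1Dx (- x).
rewrite -[x]opprK expRN lef_pV2 ?posrE ?expR_gt0 //; rewrite opprK ?subr_gt0 //.

Qed.

Lemma expR_neg_le (x : R) : 0 <= x -> expR (- x) <= (1 + x)^-1.
Proof.
move=> x0; rewrite expRN lef_pV2 ?posrE ?expR_gt0 ?expR_ge1Dx //.
by rewrite ltr_pwDl.
Qed.

Lemma ineq_hot (q : R) : 0 <= q <= 1 ->
  q * expR (- (1/3)) + (1 - q) * expR (q / 6) <= 1.
Proof.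
move=> /andP[q0 q1].
have h1 : expR (- (1/3)) <= 3/4 :> R.
  have H : expR (- (1/3)) <= (1 + 1/3)^-1 :> R by apply: expR_neg_le; lra.
  have E : (1 + 1/3 : R)^-1 = 3/4 by field.
  by rewrite E in H.
have h2 : expR (q / 6) <= (1 - q / 6)^-1 by apply: expR_le_inv; lra.
have h3 : (1 - q) * (1 - q / 6)^-1 <= 1 - 3/4 * q.
  rewrite ler_pdivrMr; last lra.
  nra.
have : q * expR (- (1/3)) <= q * (3/4) by apply: ler_wpM2l.
have : (1 - q) * expR (q / 6) <= (1 - q) * (1 - q / 6)^-1.
  by apply: ler_wpM2l => //; lra.
lra.
Qed.

Lemma ineq_free (q y : R) : 0 <= q <= 1 -> 0 <= y <= 1 ->
  q * expR (- (5/48 * y)) + (1 - q) * expR (q * y / 16) <= 1.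
Proof.
move=> /andP[q0 q1] /andP[y0 y1].
have h1 : expR (- (5/48 * y)) <= (1 + 5/48 * y)^-1.
  by apply: expR_neg_le; lra.
have h2 : expR (q * y / 16) <= (1 - q * y / 16)^-1.
  by apply: expR_le_inv; nra.
have qy0 : 0 <= q * y by nra.
have h3 : q * (1 + 5/48 * y)^-1 + (1 - q) * (1 - q * y / 16)^-1 <= 1.
  set a := (1 + 5/48 * y); set b := (1 - q * y / 16).
  have a0 : 0 < a by rewrite /a; lra.
  have b0 : 0 < b by rewrite /b; nra.
  have ha : a * a^-1 = 1 by rewrite mulfV // gt_eqF.
  have hb : b * b^-1 = 1 by rewrite mulfV // gt_eqF.
  have ia : 0 < a^-1 by rewrite invr_gt0.
  have ib : 0 < b^-1 by rewrite invr_gt0.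
  suff : q * b + (1 - q) * a <= a * b.
    move=> H.
    have : (q * b + (1 - q) * a) * (a^-1 * b^-1) <= a * b * (a^-1 * b^-1).
      by apply: ler_wpM2r => //; rewrite mulr_ge0 // ltW.
    have -> : a * b * (a^-1 * b^-1) = 1.
      by field; rewrite !gt_eqF.
    have -> : (q * b + (1 - q) * a) * (a^-1 * b^-1) = q * a^-1 + (1 - q) * b^-1.
      by field; rewrite !gt_eqF.
    by [].
  rewrite /a /b.
  have : 0 <= q * y * (5/48 + 1/16 * q - 1/16 - 5/48 * 1/16 * y) by nra.
  nra.
have : q * expR (- (5/48 * y)) <= q * (1 + 5/48 * y)^-1 by apply: ler_wpM2l.
have : (1 - q) * expR (q * y / 16) <= (1 - q) * (1 - q * y / 16)^-1.
  by apply: ler_wpM2l => //; lra.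
lra.
Qed.

Lemma step_ineq (q P P1 P0 x1 x0 : R) : 0 <= q <= 1 ->
  P - x1 <= P1 -> P - x0 <= P0 -> q * expR x1 + (1 - q) * expR x0 <= 1 ->
  q * expR (- P1) + (1 - q) * expR (- P0) <= expR (- P).
Proof.
move=> /andP[q0 q1] h1 h0 h.
have e1 : expR (- P1) <= expR (- P) * expR x1.
  by rewrite -expRD ler_expR; lra.
have e0 : expR (- P0) <= expR (- P) * expR x0.
  by rewrite -expRD ler_expR; lra.
have A1 : q * expR (- P1) <= q * (expR (- P) * expR x1) by apply: ler_wpM2l.
have A0 : (1 - q) * expR (- P0) <= (1 - q) * (expR (- P) * expR x0).
  by apply: ler_wpM2l => //; lra.
have E : 0 < expR (- P) := expR_gt0 _.
apply: le_trans (lerD A1 A0) _.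
have -> : q * (expR (- P) * expR x1) + (1 - q) * (expR (- P) * expR x0)
  = expR (- P) * (q * expR x1 + (1 - q) * expR x0) by ring.
by rewrite -[leRHS]mulr1; apply: ler_wpM2l => //; apply: ltW.
Qed.
End Real.

Local Open Scope nat_scope.
Section Comb.
Variable T : finType.
Variable e : rel T.
Hypothesis e_sym : symmetric e.
Hypothesis e_irr : irreflexive e.

Definition Hs (K U : {set T}) := [set x in K | [exists u in U, e x u]].
Definition Fr (K U : {set T}) := [set x in K | ~~ [exists u in U, e x u]].
Definition NF (F : {set T}) (w : T) := [set x in F | e w x].
Definition Zp (X Y : {set T}) :=
  [set p : T * T | (p.1 \in X) && (p.2 \in Y) && e p.1 p.2].
Definition Pp (F : {set T}) := Zp F F.

Lemma card_Zp (X Y : {set T}) : #|Zp X Y| = \sum_(x in X) #|NF Y x|.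
Proof.
rewrite (eq_bigr (fun x => \sum_(y | (y \in Y) && e x y) 1)); last first.
  by move=> x _; rewrite sum1dep_card; apply: eq_card => y; rewrite !inE.
rewrite pair_big_dep sum1dep_card; apply: eq_card => p; rewrite !inE andbA.
by [].
Qed.

Lemma card_Zp_swap (X Y : {set T}) : #|Zp Y X| <= #|Zp X Y|.
Proof.
apply: leq_trans (leq_imset_card (fun p : T * T => (p.2, p.1)) (Zp X Y)).
apply: subset_leq_card; apply/subsetP => -[a b]; rewrite inE /= => /andP[/andP[aY bX] eab].
by apply/imsetP; exists (b, a) => //; rewrite inE /= bX aY e_sym.
Qed.

Lemma Pp_mono (F F' : {set T}) : F \subset F' -> Pp F \subset Pp F'.
Proof.
move=> /subsetP FF; apply/subsetP => -[a b]; rewrite !inE /= => /andP[/andP[aF bF] ->].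
by rewrite !FF.
Qed.

Lemma Pp_loss (F F' X : {set T}) :
  (forall a b, a \in F -> b \in F -> e a b -> (a \notin F') || (b \notin F') ->
     (a \in X) || (b \in X)) ->
  #|Pp F| <= #|Pp F'| + 2 * #|Zp X F|.
Proof.
move=> h.
have sub : Pp F \subset Pp F' :|: (Zp X F :|: Zp F X).
  apply/subsetP => -[a b]; rewrite !inE /= => /andP[/andP[aF bF] eab].
  rewrite aF bF eab /= !andbT.
  case: (boolP ((a \in F') && (b \in F'))) => //= nab.
  by have := h a b aF bF eab; rewrite -negb_and nab => /(_ isT) /orP[] ->; rewrite ?orbT.
apply: leq_trans (subset_leq_card sub) _.
rewrite cardsU; apply: leq_trans (leq_subr _ _) _; rewrite leq_add2l.
rewrite cardsU; apply: leq_trans (leq_subr _ _) _.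
by rewrite mul2n -addnn leq_add2l card_Zp_swap.
Qed.

Lemma deg_le x : deg e x <= maxdeg e.
Proof. exact: (@leq_bigmax T (fun v => deg e v) x). Qed.

Lemma NF_le (F : {set T}) x : #|NF F x| <= maxdeg e.
Proof.
apply: leq_trans (deg_le x); apply: subset_leq_card; apply/subsetP => y.
by rewrite !inE => /andP[].
Qed.

Lemma hot_out (K U : {set T}) w : w \in K -> [exists u in U, e w u] ->
  #|Hs K U| <= (#|Hs (K :\ w) U|).+1 /\ Fr K U \subset Fr (K :\ w) U.
Proof.
move=> wK hw; split.
  apply: leq_trans (_ : #|w |: Hs (K :\ w) U| <= _); last first.
    by rewrite cardsU1; case: (w \in _).
  apply: subset_leq_card; apply/subsetP => x; rewrite !inE => /andP[xK ->].
  by rewrite xK andbT; case: (x == w).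
apply/subsetP => x; rewrite !inE => /andP[xK hx]; rewrite xK hx !andbT.
by apply/eqP => xw; move: hx; rewrite xw hw.
Qed.

Lemma hot_in (K U : {set T}) w u : w \in K -> u \in U -> e w u ->
  #|Hs K U| <= #|Hs (K :\ w) (U :\ u)| + deg e u /\
  Fr K U \subset Fr (K :\ w) (U :\ u).
Proof.
move=> wK uU ewu; split.
  apply: leq_trans (_ : #|Hs (K :\ w) (U :\ u) :|: [set x | e u x]| <= _).
    apply: subset_leq_card; apply/subsetP => x; rewrite !inE => /andP[xK /exists_inP[u' u'U exu']].
    case: (eqVneq x w) => [->|xw] /=; first by rewrite e_sym.
    case: (eqVneq u' u) => [eu|u'u]; first by rewrite -eu e_sym exu' orbT.
    rewrite xK /=; apply/orP; left; apply/exists_inP; exists u' => //.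
    by rewrite !inE u'u.
  by rewrite cardsU leq_subr.
apply/subsetP => x; rewrite !inE => /andP[xK hx]; rewrite xK andbT.
apply/andP; split.
  by apply/eqP => xw; move: hx; rewrite xw; case/negP; apply/exists_inP; exists u.
apply: contra hx => /exists_inP[u' u'U exu']; apply/exists_inP; exists u' => //.
by move: u'U; rewrite !inE => /andP[].
Qed.

Lemma free_out (K U : {set T}) w : w \in K -> ~~ [exists u in U, e w u] ->
  Hs K U \subset Hs (K :\ w) U /\
  #|Pp (Fr K U)| <= #|Pp (Fr (K :\ w) U)| + 2 * #|NF (Fr K U) w|.
Proof.
move=> wK hw; split.
  apply/subsetP => x; rewrite !inE => /andP[xK hx]; rewrite xK hx !andbT.
  by apply/eqP => xw; move: hx; rewrite xw (negbTE hw).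
have -> : #|NF (Fr K U) w| = #|Zp [set w] (Fr K U)| by rewrite card_Zp big_set1.
apply: Pp_loss => a b; rewrite !inE => /andP[aK ha] /andP[bK hb] _.
by rewrite aK bK ha hb /= !andbT !negbK.
Qed.

Lemma free_in (K U : {set T}) w : w \in K -> ~~ [exists u in U, e w u] ->
  #|Hs K U| + #|NF (Fr K U) w| <= #|Hs (K :\ w) (w |: U)| /\
  #|Pp (Fr K U)| <= #|Pp (Fr (K :\ w) (w |: U))| + 2 * (#|NF (Fr K U) w| * maxdeg e).
Proof.
move=> wK hw; split.
  have dis : Hs K U :&: NF (Fr K U) w = set0.
    apply/setP => x; rewrite !inE.
    by case: [exists u in U, e x u]; rewrite ?andbF ?andbA.
  rewrite -[X in X <= _]subn0 -(cards0 T) -dis -cardsU; apply: subset_leq_card.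
  apply/subsetP => x; rewrite !inE => /orP[/andP[xK /exists_inP[u uU exu]]|/andP[/andP[xK _] ewx]].
    rewrite xK andbT; apply/andP; split.
      by apply/eqP => xw; move: hw; rewrite -xw; apply/negP/negPn/exists_inP; exists u.
    by apply/exists_inP; exists u => //; rewrite inE uU orbT.
  rewrite xK andbT; apply/andP; split.
    by apply/eqP => xw; move: ewx; rewrite xw e_irr.
  by apply/exists_inP; exists w; rewrite ?inE ?eqxx // e_sym.
apply: leq_trans (Pp_loss (F' := Fr (K :\ w) (w |: U)) (X := NF (Fr K U) w) _) _; last first.
  rewrite leq_add2l leq_mul2l card_Zp /=.
  by rewrite -sum_nat_const; apply: leq_sum => x _; apply: NF_le.
move=> a b aF bF eab.
have key : forall c d, c \in Fr K U -> d \in Fr K U -> e c d ->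
    c \notin Fr (K :\ w) (w |: U) ->
    (c \in NF (Fr K U) w) || (d \in NF (Fr K U) w).
  move=> c d cF dF ecd; have := cF; rewrite !inE => /andP[cK hc].
  move: dF; rewrite inE => /andP[dK hd]; rewrite cK hc dK hd /= andbT negb_and negbK.
  case/orP => [/eqP cw|/negPn/exists_inP[u]]; first by rewrite -cw ecd orbT.
  rewrite !inE => /orP[/eqP->|uU ecu]; first by rewrite e_sym => ->.
  by move: hc; rewrite negb_exists_in => /forall_inP/(_ u uU); rewrite ecu.
move=> /orP[ha'|hb'].
  by apply: key.
by rewrite orbC; apply: key => //; rewrite e_sym.
Qed.
End Comb.

Local Open Scope ring_scope.

Set Implicit Arguments. Unset Strict Implicit. Unset Printing Implicit Defensive.
Local Open Scope ring_scope.

Section Main.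
Variable R : realType.
Variable T : finType.
Variable e : rel T.
Hypothesis e_sym : symmetric e.
Hypothesis e_irr : irreflexive e.
Variable q : R.
Hypothesis q0 : 0 <= q.
Hypothesis q1 : q <= 1.
Hypothesis qD : q * (maxdeg e)%:R <= 1.

Definition Phi (K U : {set T}) : R :=
  1/6 * q * (#|Hs e K U|)%:R + 1/32 * q ^+ 2 * (#|Pp e (Fr e K U)|)%:R.

Lemma EK_eq (K : {set T}) (f g : {set T} -> R) :
  (forall S : {set T}, S \subset K -> f S = g S) -> EK q K f = EK q K g.
Proof. by move=> h; apply: eq_bigr => S SK; rewrite h. Qed.

Lemma EK_scale (K : {set T}) c (f : {set T} -> R) :
  EK q K (fun S => c * f S) = c * EK q K f.
Proof. by rewrite /EK mulr_sumr; apply: eq_bigr => S _; rewrite mulrCA. Qed.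

Lemma qdeg_le1 x : q * (deg e x)%:R <= 1.
Proof.
apply: le_trans qD; apply: ler_wpM2l => //; rewrite ler_nat; exact: deg_le.
Qed.

Lemma qNF_le1 (F : {set T}) x : q * (#|NF e F x|)%:R <= 1.
Proof.
apply: le_trans qD; apply: ler_wpM2l => //; rewrite ler_nat; exact: NF_le.
Qed.

Lemma Phi_set0 U : Phi set0 U = 0.
Proof.
have h1 : Hs e set0 U = set0 by apply/setP => x; rewrite !inE.
have h2 : Fr e set0 U = set0 by apply/setP => x; rewrite !inE.
have h3 : Pp e set0 = set0 by apply/setP => -[a b]; rewrite !inE.
by rewrite /Phi h1 h2 h3 !cards0 !mulr0 addr0.
Qed.

Lemma main n (K U : {set T}) : #|K| = n ->
  EK q K (fun S => expR (- ((run e n K U S)%:R / 2))) <= expR (- Phi K U).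
Proof.
have qq : 0 <= q <= 1 by rewrite q0 q1.
elim: n K U => [|n IH] K U cK.
  move/eqP: cK; rewrite cards_eq0 => /eqP ->.
  by rewrite EK_set0 Phi_set0 /= mul0r oppr0.
case hp : [pick x in K] => [w|]; last first.
  move: hp; case: pickP => // none _.
  by move: cK; rewrite (_ : K = set0) ?cards0 //; apply/setP => x; rewrite inE none.
have wK : w \in K by move: hp; case: pickP => // x xK [<-].
have cK' : #|K :\ w| = n by move: cK; rewrite (cardsD1 w) wK add1n => -[].
rewrite (EK_split _ _ wK).
have E0 : EK q (K :\ w) (fun S => expR (- ((run e n.+1 K U S)%:R / 2)))
        = EK q (K :\ w) (fun S => expR (- ((run e n (K :\ w) U S)%:R / 2))).
  apply: EK_eq => S; rewrite subsetD1 => /andP[_ wS].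
  by rewrite /= hp (negbTE wS).
rewrite E0.
have IH0 := IH (K :\ w) U cK'.
case hu : [pick u in U | e w u] => [u|].
  have /andP[uU ewu] : (u \in U) && e w u.
    by move: hu; case: pickP => // x xU [<-].
  have E1 : EK q (K :\ w) (fun S => expR (- ((run e n.+1 K U (w |: S))%:R / 2)))
        = expR (- (1/2)) * EK q (K :\ w) (fun S => expR (- ((run e n (K :\ w) (U :\ u) S)%:R / 2))).
    rewrite -EK_scale; apply: EK_eq => S; rewrite subsetD1 => /andP[_ wS].
    rewrite /= hp setU11 hu run_irr ?inE ?eqxx // -expRD; congr expR.
    by rewrite -addn1 natrD; field.
  rewrite E1.
  have IH1 := IH (K :\ w) (U :\ u) cK'.
  have [h1 s1] := hot_in e_sym wK uU ewu.
  have hw : [exists u in U, e w u] by apply/exists_inP; exists u.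
  have [h0 s0] := hot_out wK hw.
  apply: (le_trans (y := q * expR (- (Phi (K :\ w) (U :\ u) + 1/2))
                     + (1 - q) * expR (- Phi (K :\ w) U))).
    apply: lerD; apply: ler_wpM2l; rewrite ?subr_ge0 //.
    by rewrite opprD addrC expRD; apply: ler_wpM2l => //; apply: expR_ge0.
  apply: (step_ineq (x1 := - (1/3)) (x0 := q / 6)) => //; last exact: ineq_hot.
    have H1 : 0 <= (#|Hs e (K :\ w) (U :\ u)|%:R + (deg e u)%:R) - #|Hs e K U|%:R :> R.
      by rewrite subr_ge0; move: h1; rewrite -(ler_nat R) natrD.
    have P1 : 0 <= #|Pp e (Fr e (K :\ w) (U :\ u))|%:R - #|Pp e (Fr e K U)|%:R :> R.
      by rewrite subr_ge0 ler_nat; apply: subset_leq_card; apply: Pp_mono.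
    have := qdeg_le1 u.
    have := mulr_ge0 q0 H1 .
    have := mulr_ge0 (exprn_ge0 2 q0) P1.
    rewrite /Phi; lra.
  have H1 : 0 <= (#|Hs e (K :\ w) U|%:R + 1) - #|Hs e K U|%:R :> R.
    by rewrite subr_ge0; move: h0; rewrite -(ler_nat R) -addn1 natrD.
  have P1 : 0 <= #|Pp e (Fr e (K :\ w) U)|%:R - #|Pp e (Fr e K U)|%:R :> R.
    by rewrite subr_ge0 ler_nat; apply: subset_leq_card; apply: Pp_mono.
  have := mulr_ge0 q0 H1 .
  have := mulr_ge0 (exprn_ge0 2 q0) P1.
  rewrite /Phi; lra.
have hw : ~~ [exists u in U, e w u].
  move: hu; case: pickP => // none _; apply/negP => /exists_inP[x xU ewx].
  by have := none x; rewrite xU ewx.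
have E1 : EK q (K :\ w) (fun S => expR (- ((run e n.+1 K U (w |: S))%:R / 2)))
      = EK q (K :\ w) (fun S => expR (- ((run e n (K :\ w) (w |: U) S)%:R / 2))).
  apply: EK_eq => S; rewrite subsetD1 => /andP[_ wS].
  by rewrite /= hp setU11 hu run_irr // ?inE ?eqxx.
rewrite E1.
have IH1 := IH (K :\ w) (w |: U) cK'.
have [hi pi] := free_in e_sym e_irr wK hw.
have [ho po] := free_out e_sym wK hw.
set f := #|NF e (Fr e K U) w| in hi pi po.
have fq : q * f%:R <= 1 by apply: qNF_le1.
apply: (le_trans (y := q * expR (- Phi (K :\ w) (w |: U))
                     + (1 - q) * expR (- Phi (K :\ w) U))).
  by apply: lerD; apply: ler_wpM2l; rewrite ?subr_ge0.
apply: (step_ineq (x1 := - (5/48 * (q * f%:R))) (x0 := q * (q * f%:R) / 16)) => //.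
- have H1 : 0 <= #|Hs e (K :\ w) (w |: U)|%:R - (#|Hs e K U|%:R + f%:R) :> R.
    by rewrite subr_ge0; move: hi; rewrite -(ler_nat R) natrD.
  have P1 : 0 <= (#|Pp e (Fr e (K :\ w) (w |: U))|%:R + 2 * (f%:R * (maxdeg e)%:R))
                  - #|Pp e (Fr e K U)|%:R :> R.
    by rewrite subr_ge0; move: pi; rewrite -(ler_nat R) natrD !natrM.
  have := mulr_ge0 q0 H1.
  have := mulr_ge0 (exprn_ge0 2 q0) P1.
  have := mulr_ge0 (mulr_ge0 q0 (ler0n R f)) (ltac:(by rewrite subr_ge0) : 0 <= 1 - q * (maxdeg e)%:R).
  rewrite /Phi; lra.
- have H1 : 0 <= #|Hs e (K :\ w) U|%:R - #|Hs e K U|%:R :> R.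
    by rewrite subr_ge0 ler_nat; apply: subset_leq_card.
  have P1 : 0 <= (#|Pp e (Fr e (K :\ w) U)|%:R + 2 * f%:R) - #|Pp e (Fr e K U)|%:R :> R.
    by rewrite subr_ge0; move: po; rewrite -(ler_nat R) natrD natrM.
  have := mulr_ge0 q0 H1.
  have := mulr_ge0 (exprn_ge0 2 q0) P1.
  rewrite /Phi; lra.
apply: ineq_free => //; apply/andP; split => //.
by apply: mulr_ge0.
Qed.
End Main.

Unset Implicit Arguments.

Theorem lemma7p2 (R : realType) (T : finType) (e : rel T)
    (e_sym : symmetric e) (e_irr : irreflexive e) (q : R)
    (q_ge0 : 0 <= q) (q_le1 : q <= 1)
    (q_le_invDelta : q * (maxdeg e)%:R <= 1) :
  1 - expR (- (q ^+ 2 * (nedges e)%:R / 200))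
  <= prob_event q (fun S => has_matching_ge e S (q ^+ 2 * (nedges e)%:R / 20)).
Proof.
set m := nedges e.
set a := q ^+ 2 * m%:R / 20.
pose r (S : {set T}) := run e #|T| setT set0 S.
have Hmain := @main R T e e_sym e_irr q q_ge0 q_le1 q_le_invDelta #|T| setT set0 (cardsT _).
have Phi0 : Phi e q setT set0 = 1/32 * q ^+ 2 * (#|Pp e setT|)%:R.
  have h1 : Hs e setT set0 = set0 by apply/setP => x; rewrite !inE; apply/negbTE/exists_inP => -[u]; rewrite inE.
  have h2 : Fr e setT set0 = setT.
    by apply/setP => x; rewrite !inE; apply/negP => /exists_inP[u]; rewrite inE.
  by rewrite /Phi h1 h2 cards0 mulr0 add0r.
have Pm : (m <= #|Pp e setT|)%N.
  apply: leq_trans (leq_imset_card (fun p : T * T => [set p.1; p.2]) (Pp e setT)).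
  apply: subset_leq_card; apply/subsetP => A; rewrite inE => /existsP[x /existsP[y /andP[exy /eqP ->]]].
  by apply/imsetP; exists (x, y) => //; rewrite !inE exy.
have prE : forall S : {set T}, pr_set q S = prK q setT S.
  by move=> S; rewrite /pr_set /prK !prodr_const setTD.
have sum1 : \sum_(S : {set T}) pr_set q S = 1.
  rewrite -(@EK1 R T q setT) /EK; apply: eq_big => S; first by rewrite subsetT.
  by rewrite prE mulr1.
have sumE : \sum_(S : {set T}) pr_set q S * expR (- ((r S)%:R / 2))
    = EK q setT (fun S => expR (- ((r S)%:R / 2))).
  by rewrite /EK; apply: eq_big => S; [rewrite subsetT | rewrite prE].
have pr0 : forall S : {set T}, 0 <= pr_set q S.
  move=> S; rewrite /pr_set; apply: mulr_ge0; apply: prodr_ge0 => // v _.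
  by rewrite subr_ge0.
rewrite /prob_event big_mkcond /=.
pose Y := \sum_(S : {set T}) pr_set q S * (1 - expR (a / 2) * expR (- ((r S)%:R / 2))).
apply: (le_trans (y := Y)); rewrite /Y.
  rewrite (eq_bigr (fun S => pr_set q S - expR (a / 2) * (pr_set q S * expR (- ((r S)%:R / 2))))); last first.
    by move=> S _; rewrite mulrBr mulr1 mulrCA.
  rewrite sumrB sum1 -mulr_sumr sumE lerD2l lerN2.
  apply: (le_trans (y := expR (a / 2) * expR (- Phi e q setT set0))).
    by apply: ler_wpM2l => //; apply: expR_ge0.
  rewrite -expRD ler_expR Phi0 /a.
  have : (m%:R : R) <= (#|Pp e setT|)%:R by rewrite ler_nat.
  move=> Hm; have := mulr_ge0 (exprn_ge0 2 q_ge0) (ltac:(by rewrite subr_ge0) : 0 <= (#|Pp e setT|)%:R - m%:R :> R).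
  have := mulr_ge0 (exprn_ge0 2 q_ge0) (ler0n R m).
  lra.
apply: ler_sum => S _.
case: ifP => hS.
  apply: ler_piMr => //; rewrite lerBlDr lerDl; apply: mulr_ge0; apply: expR_ge0.
apply: mulr_ge0_le0 => //.
rewrite subr_le0 -expRD.
have [M [HM cM _]] := @run_match T e #|T| setT set0 S (sub0set _) (fun x (h : x \in set0) => ltac:(by rewrite inE in h)).
have : ~~ (a <= (r S)%:R).
  apply: contraFN hS => ha; apply/existsP; exists M; rewrite HM /=.
  by rewrite cM.
rewrite -ltNge => ha.
have hx : 0 <= a / 2 + - ((r S)%:R / 2) by lra.
by apply: le_trans (expR_ge1Dx _); rewrite lerDl.
Qed.
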